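(* Let $a\neq0$, $b>0$, $d$ be integers with $d$ not a perfect square, $\alpha=a+b^2\sqrt d$, $N_\alpha=a^2-b^4d$ not a perfect square, $\varepsilon=(t+u\sqrt d)/2$ in the ring of integers of $\mathbb{Q}(\sqrt d)$ with $t,u$ nonzero integers, and let $x\ne0$, $y>0$ be integers with $x+y^2\sqrt d=\alpha\varepsilon^2$. Let $r_1'=tb^2+au+2by$ and $r_1''=tb^2+au-2by$. Then $\gcd(r_1',r_1'')$ is even, unless $N_\alpha\equiv1\pmod4$ and $4\mid d$. *)

(* Defs.v *)
From mathcomp Require Import all_boot all_order all_algebra all_field.
Set Implicit Arguments. Unset Strict Implicit. Unset Printing Implicit Defensive.
Import Order.TTheory GRing.Theory Num.Theory.
Local Open Scope ring_scope.

Definition is_square (n : int) : Prop := exists m : int, n = m * m.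

(* sqrt d as a complex algebraic number (principal root; i*sqrt|d| if d<0) *)
Definition sqrtd (d : int) : algC := sqrtC (d%:~R).

(* Main.v *)
Require Import Defs.
From mathcomp Require Import all_boot all_order all_algebra all_field.
From mathcomp Require Import ring.
Import Order.TTheory GRing.Theory Num.Theory.
Local Open Scope ring_scope.
Lemma alg_part (a b d t u x y : int) : ~ is_square d ->
  (x%:~R + (y ^+ 2)%:~R * sqrtd d : algC)
    = (a%:~R + (b ^+ 2)%:~R * sqrtd d) * ((t%:~R + u%:~R * sqrtd d) / 2%:R) ^+ 2 ->
  4 * x = a * (t*t + d*u*u) + 2*b*b*d*t*u /\
  4 * (y ^+ 2) = 2*a*t*u + b*b*(t*t+d*u*u).
Proof.
move=> nsq; set s := sqrtd d => E.
have hs2 : s ^+ 2 = d%:~R by rewrite /s /sqrtd sqrtCK.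
set P := a * (t*t + d*u*u) + 2*b*b*d*t*u.
set Q := 2*a*t*u + b*b*(t*t+d*u*u).
have key : ((4 * x - P)%:~R : algC) = (Q - 4 * y^+2)%:~R * s.
  apply/eqP; rewrite -subr_eq0; apply/eqP.
  transitivity (4 * ((x%:~R + (y ^+ 2)%:~R * s) -
     (a%:~R + (b ^+ 2)%:~R * s) * ((t%:~R + u%:~R * s) / 2%:R) ^+ 2)
     + (s^+2 - d%:~R) * (a%:~R * u%:~R ^+2 + 2 * b%:~R^+2 * t%:~R * u%:~R + b%:~R^+2 * u%:~R^+2 * s)).
    by rewrite /P /Q; field.
  by rewrite E hs2 !subrr mulr0 mul0r addr0.
have [hq|hq] := eqVneq (Q - 4 * y^+2) 0.
  move: key; rewrite hq mul0r => /eqP; rewrite intr_eq0 => /eqP h.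
  by split; apply/eqP; rewrite ?h ?(eq_sym _ Q) -subr_eq0 ?h ?hq.
exfalso; apply: nsq.
have sQ : s \in Crat.
  apply/CratP; exists ((4 * x - P)%:~R / (Q - 4 * y^+2)%:~R).
  rewrite fmorph_div /= !rmorph_int key; move: (Q - 4 * y ^+ 2) hq => q hq; field.
  by rewrite intr_eq0.
have sA : s \in Aint.
  apply: (@root_monic_Aint ('X^2 - (d%:~R)%:P)).
  - by rewrite rootE !hornerE hs2 subrr.
  - by rewrite monicXnsubC.
  - by rewrite polyOverXnsubC rpred_int.
have /intrP [m hm] := Cint_rat_Aint sQ sA.
exists m; apply/eqP; rewrite -(eqr_int algC) -hs2 hm rmorphM /= expr2.
by [].
Qed.
Lemma fin4 (A B D T U : 'Z_4) :
  (A * (T*T + D*U*U) + 2%:R*B*B*D*T*U == 0) ->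
  (2%:R*A*T*U + B*B*(T*T+D*U*U) == 0) ->
  ~~ ((A*A - B*B*B*B*D == 1) && (D == 0)) ->
  ((T*B*B + A*U == 0) || (T*B*B + A*U == 2%:R)).
Proof.
(move: A B D T U; do 5![case=> [[|[|[|[|//]]]] ?]]; by []).
Qed.

Lemma z4E (z : int) : exists2 k : nat, (k < 4)%N & ((z %% 4)%Z = k /\ (z%:~R : 'Z_4) = k%:R).
Proof.
have h := divz_eq z 4.
have h0 : (0 <= (z %% 4)%Z) by rewrite modz_ge0.
case: (z %% 4)%Z h h0 (ltz_pmod z (isT : (0 < 4 :> int))) => // k h _ hk.
exists k => //; split => //.
rewrite {1}h rmorphD /= rmorphM /=.
have -> : ((4%:~R : 'Z_4)) = 0 by apply/val_inj.
by rewrite mulr0 add0r.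
Qed.

Lemma z4_0 (z : int) : (z%:~R : 'Z_4) = 0 -> (4 %| z)%Z.
Proof.
have [k hk [hm he]] := z4E z; rewrite he => h0.
apply/dvdz_mod0P; rewrite hm.
by move: hk h0; clear hm he; case: k => [|[|[|[|]]]].
Qed.

Lemma z4_1 (z : int) : (z%:~R : 'Z_4) = 1 -> (z %% 4)%Z = 1.
Proof.
have [k hk [hm he]] := z4E z; rewrite he => h0; rewrite hm.
by move: hk h0; clear hm he; case: k => [|[|[|[|]]]].
Qed.

Lemma z4_2 (z : int) : (z%:~R : 'Z_4) = 0 \/ (z%:~R : 'Z_4) = 2%:R -> (2 %| z)%Z.
Proof.
have [k hk [hm he]] := z4E z; rewrite he => h0.
rewrite (divz_eq z 4) hm; apply: rpredD.
  by apply: dvdz_mull.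
by move: hk h0; clear hm he; case: k => [|[|[|[|]]]] // _ []. 
Qed.

Theorem lemma3p4 (a b d t u x y : int) :
  a != 0 -> 0 < b -> ~ is_square d ->
  ~ is_square (a ^+ 2 - b ^+ 4 * d) ->
  t != 0 -> u != 0 ->
  ((t%:~R + u%:~R * sqrtd d) / 2%:R : algC) \in Aint ->
  x != 0 -> 0 < y ->
  (x%:~R + (y ^+ 2)%:~R * sqrtd d : algC)
    = (a%:~R + (b ^+ 2)%:~R * sqrtd d) * ((t%:~R + u%:~R * sqrtd d) / 2%:R) ^+ 2 ->
  let r1' := t * b ^+ 2 + a * u + 2 * b * y in
  let r1'' := t * b ^+ 2 + a * u - 2 * b * y in
  ~ (((a ^+ 2 - b ^+ 4 * d) %% 4)%Z = 1 /\ (4 %| d)%Z) ->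
  (2 %| gcdz r1' r1'')%Z.
Proof.
move=> ha hb nsq nN ht hu hA hx hy E r1' r1'' hN.
have [h1 h2] := @alg_part _ _ _ _ _ _ _ nsq E.
have h4 : (4%:~R : 'Z_4) = 0 by apply/val_inj.
pose A := (a%:~R : 'Z_4); pose B := (b%:~R : 'Z_4); pose D := (d%:~R : 'Z_4).
pose T := (t%:~R : 'Z_4); pose U := (u%:~R : 'Z_4).
have e1 : A * (T*T + D*U*U) + 2%:R*B*B*D*T*U == 0.
  have := congr1 (fun z : int => (z%:~R : 'Z_4)) h1.
  rewrite /= rmorphM /= h4 mul0r => ->.
  rewrite /A /B /D /T /U; apply/eqP; ring.
have e2 : 2%:R*A*T*U + B*B*(T*T+D*U*U) == 0.
  have := congr1 (fun z : int => (z%:~R : 'Z_4)) h2.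
  rewrite /= rmorphM /= h4 mul0r => ->.
  rewrite /A /B /D /T /U; apply/eqP; ring.
have e3 : ~~ ((A*A - B*B*B*B*D == 1) && (D == 0)).
  apply/negP => /andP [/eqP n1 /eqP n0]; apply: hN; split.
    apply: z4_1; have -> : ((a^+2 - b^+4*d)%:~R : 'Z_4) = A*A - B*B*B*B*D by rewrite /A /B /D; ring.
    exact: n1.
  exact: z4_0.
have w2 : (2 %| t * b ^+ 2 + a * u)%Z.
  apply: z4_2.
  have -> : ((t * b ^+ 2 + a * u)%:~R : 'Z_4) = T*B*B + A*U.
    rewrite /A /B /T /U; ring.
  by case/orP: (@fin4 _ _ _ _ _ e1 e2 e3) => /eqP ->; [left|right].
rewrite dvdz_gcd /r1' /r1''; apply/andP; split.
  by apply: rpredD => //; rewrite -mulrA dvdz_mulr.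
by apply: rpredB => //; rewrite -mulrA dvdz_mulr.
Qed.
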